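(* For integers $1\le q\le p<n$ define $$K_n=\Big(\frac2n\Big)^{pq/2}\prod_{j=0}^{q-1}\frac{\Gamma((n-j)/2)}{\Gamma((n-p-j)/2)}.$$ If $p=p_n\to\infty$, $\limsup_{n\to\infty}p/n<1$ and $pq=O(n)$, then as $n\to\infty$ $$\log K_n=-\frac{pq}{2}+\frac{q(q+1)}{4}\log\Big(1+\frac{p}{n-p}\Big)-\frac{pq^3}{12n^2}-c_nq\log\Big(1-\frac pn\Big)+o(1),$$ where $c_n=\frac12(n-p-q-1)$. *)

(* Defs.v *)
From Stdlib Require Import Reals.
From Coquelicot Require Import Coquelicot.
Open Scope R_scope.

Definition Gamma (x : R) : R :=
  RInt_gen (fun t => Rpower t (x - 1) * exp (- t)) (at_right 0) (Rbar_locally p_infty).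

Fixpoint prodR (f : nat -> R) (m : nat) : R :=
  match m with
  | O => 1
  | S m' => prodR f m' * f m'
  end.

Definition K (n p q : nat) : R :=
  Rpower (2 / INR n) (INR p * INR q / 2) *
  prodR (fun j => Gamma ((INR n - INR j) / 2) / Gamma ((INR n - INR p - INR j) / 2)) q.

Definition c_ (n p q : nat) : R := (INR n - INR p - INR q - 1) / 2.

Definition K_approx (n p q : nat) : R :=
  - (INR p * INR q) / 2
  + INR q * (INR q + 1) / 4 * ln (1 + INR p / (INR n - INR p))
  - INR p * INR q ^ 3 / (12 * INR n ^ 2)
  - c_ n p q * INR q * ln (1 - INR p / INR n).

(* Main.v *)
Require Import Defs.
From Stdlib Require Import Reals Lra Psatz Classical Arith.
From Coquelicot Require Import Coquelicot.
Open Scope R_scope.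

Lemma cmp0 (f df : R -> R) (X : R) :
  (forall x, 0 <= x <= X -> is_derive f x (df x)) ->
  (forall x, 0 <= x <= X -> 0 <= df x) ->
  forall x, 0 <= x <= X -> f 0 <= f x.
Proof.
  intros Hd Hp x Hx.
  destruct (Req_dec x 0) as [->|Hx0]; [lra|].
  destruct (MVT_gen f 0 x df) as [c [Hc Heq]].
  - intros z Hz. apply Hd. rewrite Rmin_left in Hz by lra. rewrite Rmax_right in Hz by lra. lra.
  - intros z Hz. rewrite Rmin_left in Hz by lra. rewrite Rmax_right in Hz by lra.
    apply continuity_pt_filterlim. apply (ex_derive_continuous (K:=R_AbsRing) (V:=R_NormedModule)). eexists. apply Hd. lra.
  - rewrite Rmin_left in Hc by lra. rewrite Rmax_right in Hc by lra.
    assert (0 <= df c) by (apply Hp; lra). nra.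
Qed.

Lemma cmp (f g df dg : R -> R) (X : R) :
  (forall x, 0 <= x <= X -> is_derive f x (df x)) ->
  (forall x, 0 <= x <= X -> is_derive g x (dg x)) ->
  (forall x, 0 <= x <= X -> df x <= dg x) ->
  f 0 <= g 0 ->
  forall x, 0 <= x <= X -> f x <= g x.
Proof.
  intros Hf Hg Hle H0 x Hx.
  assert (H := cmp0 (fun t => g t - f t) (fun t => dg t - df t) X).
  assert ((fun t => g t - f t) 0 <= (fun t => g t - f t) x); [|simpl in *; lra].
  apply H; auto.
  - intros t Ht. apply (is_derive_minus (K:=R_AbsRing) (V:=R_NormedModule) g f); auto.
  - intros t Ht. specialize (Hle t Ht). lra.
Qed.

Lemma T2 (u : R) : 0 <= u <= 1/2 -> 0 <= - ln (1 - u) - u <= u ^ 2.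
Proof.
  intros Hu. split.
  - assert (H := cmp (fun _ => 0) (fun u => - ln (1-u) - u) (fun _ => 0) (fun u => / (1-u) - 1) (1/2)).
    simpl in H. apply H; auto.
    + intros. auto_derive; auto.
    + intros t Ht. auto_derive. lra. unfold Rminus. field. lra.
    + intros t Ht. apply Rle_trans with (t / (1-t)). apply Rdiv_le_0_compat; lra. right; field; lra.
    + replace (1 - 0) with 1 by ring. rewrite ln_1. lra.
  - assert (H := cmp (fun u => - ln (1-u) - u) (fun u => u^2) (fun u => / (1-u) - 1) (fun u => 2 * u) (1/2)).
    simpl in H. apply H; auto.
    + intros t Ht. auto_derive. lra. unfold Rminus. field. lra.
    + intros t Ht. auto_derive. auto. ring.
    + intros t Ht. apply Rle_trans with (t / (1-t)). right; field; lra.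
      apply Rle_div_l. lra. nra.
    + replace (1 - 0) with 1 by ring. rewrite ln_1. lra.
Qed.

Lemma T1a (u : R) : 0 <= u <= 1/2 -> 0 <= - ln (1 - u) - u - u^2/2 <= 2 * u^3 / 3.
Proof.
  intros Hu. split.
  - assert (H := cmp (fun _ => 0) (fun u => - ln (1-u) - u - u^2/2) (fun _ => 0) (fun u => u^2 / (1-u)) (1/2)).
    simpl in H. apply H; auto.
    + intros. auto_derive; auto.
    + intros t Ht. auto_derive. lra. unfold Rminus. field. lra.
    + intros t Ht. apply Rdiv_le_0_compat; nra.
    + replace (1 - 0) with 1 by ring. rewrite ln_1. lra.
  - assert (H := cmp (fun u => - ln (1-u) - u - u^2/2) (fun u => 2 * u^3/3) (fun u => u^2 / (1-u)) (fun u => 2 * u^2) (1/2)).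
    simpl in H. apply H; auto.
    + intros t Ht. auto_derive. lra. unfold Rminus. field. lra.
    + intros t Ht. auto_derive. auto. field.
    + intros t Ht. apply Rle_div_l. lra. nra.
    + replace (1 - 0) with 1 by ring. rewrite ln_1. lra.
Qed.

Lemma T1 (u : R) : 0 <= u <= 1/2 ->
  0 <= (1 - u) * ln (1 - u) + u - u^2/2 - u^3/6 <= u^4 / 6.
Proof.
  intros Hu. split.
  - assert (H := cmp (fun _ => 0) (fun u => (1 - u) * ln (1 - u) + u - u^2/2 - u^3/6) (fun _ => 0) (fun u => - ln (1 - u) - u - u^2/2) (1/2)).
    simpl in H. apply H; auto.
    + intros. auto_derive; auto.
    + intros t Ht. auto_derive. lra. unfold Rminus. field. lra.
    + intros t Ht. apply T1a; lra.
    + replace (1 - 0) with 1 by ring. rewrite ln_1. lra.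
  - assert (H := cmp (fun u => (1 - u) * ln (1 - u) + u - u^2/2 - u^3/6) (fun u => u^4/6) (fun u => - ln (1 - u) - u - u^2/2) (fun u => 2 * u^3/3) (1/2)).
    simpl in H. apply H; auto.
    + intros t Ht. auto_derive. lra. unfold Rminus. field. lra.
    + intros t Ht. auto_derive. auto. field.
    + intros t Ht. apply T1a; lra.
    + replace (1 - 0) with 1 by ring. rewrite ln_1. lra.
Qed.

Lemma T4 (w : R) : 0 <= w -> 0 <= w - ln (1 + w) <= w^2 / 2.
Proof.
  intros Hw. split.
  - assert (H := cmp (fun _ => 0) (fun w => w - ln (1 + w)) (fun _ => 0) (fun w => w / (1 + w)) w).
    simpl in H. apply H; auto; try lra.
    + intros. auto_derive; auto.
    + intros t Ht. auto_derive. lra. unfold Rminus. field. lra.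
    + intros t Ht. apply Rdiv_le_0_compat; nra.
    + replace (1 + 0) with 1 by ring. rewrite ln_1. lra.
  - assert (H := cmp (fun w => w - ln (1 + w)) (fun w => w^2/2) (fun w => w / (1 + w)) (fun w => w) w).
    simpl in H. apply H; auto; try lra.
    + intros t Ht. auto_derive. lra. unfold Rminus. field. lra.
    + intros t Ht. auto_derive. auto. field.
    + intros t Ht. apply Rle_div_l. lra. nra.
    + replace (1 + 0) with 1 by ring. rewrite ln_1. lra.
Qed.

Lemma T3a (w : R) : 0 <= w -> 0 <= ln (1 + w) / 2 - (w / 2) / (1 + w) <= w^2 / 4.
Proof.
  intros Hw. split.
  - assert (H := cmp (fun _ => 0) (fun w => ln (1 + w) / 2 - (w / 2) / (1 + w)) (fun _ => 0) (fun w => w / (2 * (1 + w)^2)) w).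
    simpl in H. apply H; auto; try lra.
    + intros. auto_derive; auto.
    + intros t Ht. auto_derive. lra. unfold Rminus. field. lra.
    + intros t Ht. apply Rdiv_le_0_compat; nra.
    + replace (1 + 0) with 1 by ring. rewrite ln_1. lra.
  - assert (H := cmp (fun w => ln (1 + w) / 2 - (w / 2) / (1 + w)) (fun w => w^2/4) (fun w => w / (2 * (1 + w)^2)) (fun w => w / 2) w).
    simpl in H. apply H; auto; try lra.
    + intros t Ht. auto_derive. lra. unfold Rminus. field. lra.
    + intros t Ht. auto_derive. auto. field.
    + intros t Ht. apply Rle_div_l. nra. nra.
    + replace (1 + 0) with 1 by ring. rewrite ln_1. lra.
Qed.

Lemma T3 (w : R) : 0 <= w -> 0 <= (1 + w/2) * ln (1 + w) - w <= w^3 / 12.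
Proof.
  intros Hw. split.
  - assert (H := cmp (fun _ => 0) (fun w => (1 + w/2) * ln (1 + w) - w) (fun _ => 0) (fun w => ln (1 + w) / 2 - (w / 2) / (1 + w)) w).
    simpl in H. apply H; auto; try lra.
    + intros. auto_derive; auto.
    + intros t Ht. auto_derive. lra. unfold Rminus. field. lra.
    + intros t Ht. apply T3a; lra.
    + replace (1 + 0) with 1 by ring. rewrite ln_1. lra.
  - assert (H := cmp (fun w => (1 + w/2) * ln (1 + w) - w) (fun w => w^3/12) (fun w => ln (1 + w) / 2 - (w / 2) / (1 + w)) (fun w => w^2/4) w).
    simpl in H. apply H; auto; try lra.
    + intros t Ht. auto_derive. lra. unfold Rminus. field. lra.
    + intros t Ht. auto_derive. auto. field.
    + intros t Ht. apply T3a; lra.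
    + replace (1 + 0) with 1 by ring. rewrite ln_1. lra.
Qed.

Lemma ballR (x e y : R) : ball x e y <-> Rabs (y - x) < e.
Proof. reflexivity. Qed.

Lemma gen_exist (f : R -> R) (M : R) :
  (forall t, 0 < t -> 0 <= f t) ->
  (forall t, 0 < t -> continuous f t) ->
  (forall a b, 0 < a <= b -> RInt f a b <= M) ->
  exists l, is_RInt_gen f (at_right 0) (Rbar_locally p_infty) l /\
            (forall a b, 0 < a <= b -> RInt f a b <= l).
Proof.
  intros Hpos Hcont Hbd.
  assert (Hex : forall a b, 0 < a <= b -> ex_RInt f a b).
  { intros a b Hab. apply (ex_RInt_continuous (V:=R_CompleteNormedModule)). intros z Hz.
    rewrite Rmin_left in Hz by lra. apply Hcont. lra. }
  set (E := fun v => exists a b, 0 < a <= b /\ v = RInt f a b).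
  destruct (completeness E) as [l [Hub Hlub]].
  { exists M. intros v [a [b [Hab ->]]]. apply Hbd; auto. }
  { exists (RInt f 1 1). exists 1, 1. split; [lra|auto]. }
  exists l. split.
  2:{ intros a b Hab. apply Hub. exists a, b. auto. }
  intros P [eps Heps].
  destruct (classic (exists v, E v /\ l - eps < v)) as [[v [[a0 [b0 [Hab0 ->]]] Hv]] | Hno].
  2:{ exfalso. assert (l <= l - eps). apply Hlub. intros v Ev.
      destruct (Rle_dec v (l - eps)) as [h|h]; auto. exfalso. apply Hno. exists v. split; auto. lra.
      destruct eps; simpl in *; lra. }
  assert (Ha0 : 0 < a0) by lra.
  apply Filter_prod with (fun a => 0 < a < a0) (fun b => b0 < b).
  - exists (mkposreal a0 Ha0). intros y Hy Hy0. rewrite ballR in Hy. simpl in Hy.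
    rewrite Rminus_0_r in Hy. apply Rabs_def2 in Hy. lra.
  - exists b0. auto.
  - intros a b Ha Hb. simpl. exists (RInt f a b). split.
    + apply (RInt_correct (V:=R_CompleteNormedModule)). apply Hex. lra.
    + apply Heps. rewrite ballR.
      assert (Hup : RInt f a b <= l). { apply Hub. exists a, b. split; auto. lra. }
      assert (Hlo : RInt f a0 b0 <= RInt f a b).
      { rewrite <- (RInt_Chasles f a a0 b) by (apply Hex; lra).
        rewrite <- (RInt_Chasles f a0 b0 b) by (apply Hex; lra).
        assert (0 <= RInt f a a0). { apply RInt_ge_0. lra. apply Hex; lra. intros; apply Hpos; lra. }
        assert (0 <= RInt f b0 b). { apply RInt_ge_0. lra. apply Hex; lra. intros; apply Hpos; lra. }
        change plus with Rplus. lra. }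
      apply Rabs_def1; lra.
Qed.

Definition gf (x t : R) := Rpower t (x - 1) * exp (- t).

Lemma exp_le (a b : R) : a <= b -> exp a <= exp b.
Proof. intros [h|h]. left; apply exp_increasing; auto. right; subst; auto. Qed.

Lemma gf_pos x t : 0 < gf x t.
Proof. unfold gf, Rpower. apply Rmult_lt_0_compat; apply exp_pos. Qed.

Lemma gf_cont x t : 0 < t -> continuous (gf x) t.
Proof.
  intros Ht. apply (ex_derive_continuous (K:=R_AbsRing) (V:=R_NormedModule)).
  unfold gf, Rpower. auto_derive. auto.
Qed.

Lemma key_bound (a t : R) : 0 <= a -> 0 < t -> a * ln t - t <= 2 * a^2 - t / 2.
Proof.
  intros Ha Ht.
  destruct (Rle_dec t 1) as [h|h].
  - assert (ln t <= 0). { rewrite <- ln_1. apply ln_le; lra. } nra.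
  - set (s := sqrt t).
    assert (Hs : s * s = t) by (apply sqrt_sqrt; lra).
    assert (Hs1 : 1 <= s). { unfold s. rewrite <- sqrt_1. apply sqrt_le_1_alt. lra. }
    assert (Hl : ln t = 2 * ln s).
    { rewrite <- Hs. rewrite ln_mult by lra. ring. }
    assert (Hls : ln s <= s - 1).
    { assert (H1 := T4 (s - 1)). destruct H1 as [H1 _]. lra. replace (1 + (s - 1)) with s in H1 by ring. lra. }
    rewrite Hl.
    assert (a * ln s <= a * (s - 1)) by (apply Rmult_le_compat_l; lra).
    assert (0 <= (2 * a - s) ^ 2) by (apply pow2_ge_0).
    nra.
Qed.

Lemma gf_bound x t : 1 <= x -> 0 < t -> gf x t <= exp (2 * (x-1)^2) * exp (- t / 2).
Proof.
  intros Hx Ht. unfold gf, Rpower. rewrite <- !exp_plus. apply exp_le.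
  assert (H := key_bound (x - 1) t). lra.
Qed.

Lemma gf_int_bound x a b : 1 <= x -> 0 < a <= b ->
  RInt (gf x) a b <= 2 * exp (2 * (x-1)^2).
Proof.
  intros Hx Hab. set (E := exp (2 * (x-1)^2)).
  assert (HE : 0 < E) by apply exp_pos.
  assert (HI : is_RInt (fun t => E * exp (- t / 2)) a b
                  (minus ((fun t => - 2 * E * exp (- t / 2)) b) ((fun t => - 2 * E * exp (- t / 2)) a))).
  { apply (is_RInt_derive (V:=R_CompleteNormedModule) (fun t => - 2 * E * exp (- t / 2))).
    - intros z _. auto_derive. auto. unfold Rdiv. field.
    - intros z _. apply (ex_derive_continuous (K:=R_AbsRing) (V:=R_NormedModule)). auto_derive. auto. }
  apply Rle_trans with (RInt (fun t => E * exp (- t / 2)) a b).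
  - apply RInt_le. lra.
    + apply (ex_RInt_continuous (V:=R_CompleteNormedModule)). intros z Hz.
      rewrite Rmin_left in Hz by lra. apply gf_cont. lra.
    + eexists. apply HI.
    + intros t Ht. apply gf_bound; lra.
  - rewrite (is_RInt_unique _ _ _ _ HI). simpl. unfold minus, plus, opp; simpl.
    assert (0 < exp (- b / 2)) by apply exp_pos.
    assert (exp (- a / 2) <= 1). { rewrite <- exp_0. apply exp_le. lra. }
    nra.
Qed.

Lemma Gamma_spec x : 1 <= x ->
  is_RInt_gen (gf x) (at_right 0) (Rbar_locally p_infty) (Gamma x) /\
  (forall a b, 0 < a <= b -> RInt (gf x) a b <= Gamma x).
Proof.
  intros Hx.
  destruct (gen_exist (gf x) (2 * exp (2 * (x-1)^2))) as [l [Hl Hle]].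
  - intros; left; apply gf_pos.
  - intros; apply gf_cont; auto.
  - intros; apply gf_int_bound; auto.
  - assert (E : Gamma x = l).
    { unfold Gamma. apply (is_RInt_gen_unique (V:=R_CompleteNormedModule)). exact Hl. }
    rewrite E. auto.
Qed.

Lemma Gamma_pos x : 1 <= x -> 0 < Gamma x.
Proof.
  intros Hx. destruct (Gamma_spec x Hx) as [_ H].
  apply Rlt_le_trans with (RInt (gf x) 1 2); [|apply H; lra].
  apply Rlt_le_trans with (RInt (fun _ => exp (-2)) 1 2).
  - rewrite RInt_const. simpl. unfold scal; simpl; unfold mult; simpl.
    assert (0 < exp (-2)) by apply exp_pos. nra.
  - apply RInt_le. lra.
    + apply ex_RInt_const.
    + apply (ex_RInt_continuous (V:=R_CompleteNormedModule)). intros z Hz.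
      rewrite Rmin_left in Hz by lra. apply gf_cont. lra.
    + intros t Ht. unfold gf, Rpower.
      assert (0 <= ln t). { rewrite <- ln_1. apply ln_le; lra. }
      assert (1 <= exp ((x - 1) * ln t)). { assert (exp 0 <= exp ((x - 1) * ln t)) by (apply exp_le; apply Rmult_le_pos; lra). rewrite exp_0 in *; lra. }
      assert (exp (-2) <= exp (- t)) by (apply exp_le; lra).
      assert (0 < exp (-2)) by apply exp_pos. nra.
Qed.

Definition gg (x t : R) := - (Rpower t x * exp (- t)).

Lemma gg_lim0 x : 1 <= x -> filterlim (gg x) (at_right 0) (locally 0).
Proof.
  intros Hx. unfold filterlim, filter_le, filtermap. intros P [eps H].
  assert (He : 0 < Rmin eps 1) by (apply Rmin_pos; [apply cond_pos | lra]).
  exists (mkposreal _ He). intros t Ht Ht0. apply H. rewrite ballR. rewrite ballR in Ht.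
  simpl in Ht. rewrite Rminus_0_r in *. apply Rabs_def2 in Ht.
  assert (Hm1 := Rmin_r eps 1). assert (Hme := Rmin_l eps 1).
  unfold gg, Rpower.
  assert (ln t <= 0). { rewrite <- ln_1. apply ln_le; lra. }
  assert (exp (x * ln t) <= t).
  { rewrite <- (exp_ln t) at 2 by lra. apply exp_le. nra. }
  assert (exp (- t) <= 1). { rewrite <- exp_0. apply exp_le. lra. }
  assert (0 < exp (x * ln t)) by apply exp_pos.
  assert (0 < exp (- t)) by apply exp_pos.
  rewrite Rabs_Ropp. rewrite Rabs_pos_eq by nra. nra.
Qed.

Lemma gg_liminf x : 1 <= x -> filterlim (gg x) (Rbar_locally p_infty) (locally 0).
Proof.
  intros Hx. unfold filterlim, filter_le, filtermap. intros P [eps H].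
  set (E := exp (2 * x^2)).
  assert (HE : 0 < E) by apply exp_pos.
  assert (Heps := cond_pos eps).
  exists (2 * E / eps + 1). intros t Ht. apply H. rewrite ballR.
  assert (H0 : 0 < 2 * E / eps) by (apply Rdiv_lt_0_compat; lra).
  assert (Ht0 : 0 < t) by lra.
  unfold gg, Rpower. rewrite Rminus_0_r, Rabs_Ropp.
  rewrite Rabs_pos_eq by (left; apply Rmult_lt_0_compat; apply exp_pos).
  rewrite <- exp_plus.
  assert (H1 : exp (x * ln t + - t) <= E * exp (- t / 2)).
  { unfold E. rewrite <- exp_plus. apply exp_le. assert (H2 := key_bound x t). lra. }
  assert (H2 : exp (- t / 2) * (t / 2) < 1).
  { assert (H3 := exp_ineq1 (t / 2)).
    replace (- t / 2) with (- (t / 2)) by field. rewrite exp_Ropp.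
    assert (0 < exp (t/2)) by apply exp_pos.
    apply Rmult_lt_reg_l with (exp (t / 2)); auto. rewrite <- Rmult_assoc, Rinv_r by lra. lra. }
  assert (H3 : 2 * E / eps * eps = 2 * E) by (field; lra).
  assert (0 < exp (- t / 2)) by apply exp_pos.
  assert (E * exp (- t / 2) * t < 2 * E) by nra.
  apply Rle_lt_trans with (E * exp (- t / 2)); auto.
  apply Rmult_lt_reg_r with t; auto. nra.
Qed.

Lemma gg_deriv x z : 0 < z -> is_derive (gg x) z (gf (x + 1) z - x * gf x z).
Proof.
  intros Hz. unfold gg, gf, Rpower.
  replace (x + 1 - 1) with x by ring.
  assert (E1 : exp ((x - 1) * ln z) = exp (x * ln z) / z).
  { replace ((x - 1) * ln z) with (x * ln z + - ln z) by ring.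
    rewrite exp_plus, (exp_Ropp (ln z)), exp_ln by lra. unfold Rdiv. ring. }
  rewrite E1.
  auto_derive. lra. field. lra.
Qed.

Lemma Gamma_succ x : 1 <= x -> Gamma (x + 1) = x * Gamma x.
Proof.
  intros Hx.
  assert (HD : is_RInt_gen (Derive (gg x)) (at_right 0) (Rbar_locally p_infty) (0 - 0)).
  { apply is_RInt_gen_Derive.
    - apply Filter_prod with (fun a => 0 < a) (fun b => 0 < b).
      + exists (mkposreal 1 Rlt_0_1). intros; auto.
      + exists 0. auto.
      + intros a b Ha Hb z Hz. simpl in Hz.
        assert (0 < z). { apply Rlt_le_trans with (Rmin a b). apply Rmin_pos; auto. tauto. }
        eexists. apply gg_deriv. auto.
    - apply Filter_prod with (fun a => 0 < a) (fun b => 0 < b).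
      + exists (mkposreal 1 Rlt_0_1). intros; auto.
      + exists 0. auto.
      + intros a b Ha Hb z Hz. simpl in Hz.
        assert (Hz0 : 0 < z). { apply Rlt_le_trans with (Rmin a b). apply Rmin_pos; auto. tauto. }
        apply continuous_ext_loc with (fun t => gf (x + 1) t - x * gf x t).
        * exists (mkposreal z Hz0). intros y Hy. rewrite ballR in Hy. simpl in Hy.
          apply Rabs_def2 in Hy. symmetry. apply is_derive_unique. apply gg_deriv. lra.
        * apply (ex_derive_continuous (K:=R_AbsRing) (V:=R_NormedModule)).
          unfold gf, Rpower. auto_derive. lra.
    - apply gg_lim0; auto.
    - apply gg_liminf; auto. }
  destruct (Gamma_spec x Hx) as [Hg _].
  assert (HS := is_RInt_gen_scal _ x _ Hg).
  assert (HP := is_RInt_gen_plus _ _ _ _ HS HD).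
  assert (HE : is_RInt_gen (gf (x + 1)) (at_right 0) (Rbar_locally p_infty)
                 (plus (scal x (Gamma x)) (0 - 0))).
  { eapply is_RInt_gen_ext; [|exact HP].
    apply Filter_prod with (fun a => 0 < a) (fun b => 0 < b).
    + exists (mkposreal 1 Rlt_0_1). intros; auto.
    + exists 0. auto.
    + intros a b Ha Hb z Hz. simpl in Hz.
      assert (Hz0 : 0 < z). { apply Rlt_le_trans with (Rmin a b). apply Rmin_pos; auto. left; tauto. }
      rewrite (is_derive_unique _ _ _ (gg_deriv x z Hz0)).
      unfold plus, scal; simpl; unfold mult; simpl. ring. }
  assert (HU := is_RInt_gen_unique (V:=R_CompleteNormedModule) _ _ HE).
  change (Gamma (x + 1)) with (RInt_gen (V:=R_CompleteNormedModule) (gf (x + 1)) (at_right 0) (Rbar_locally p_infty)).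
  rewrite HU.
  unfold plus, scal; simpl; unfold mult; simpl. ring.
Qed.

Lemma Gamma_cs a b : 1 <= a -> 1 <= b -> Gamma ((a + b) / 2) ^ 2 <= Gamma a * Gamma b.
Proof.
  intros Ha Hb. set (m := (a + b) / 2).
  assert (Hm : 1 <= m) by (unfold m; lra).
  assert (Pa := Gamma_pos a Ha). assert (Pb := Gamma_pos b Hb). assert (Pm := Gamma_pos m Hm).
  set (lam := Gamma m / Gamma a).
  assert (Hlam : 0 < lam) by (apply Rdiv_lt_0_compat; auto).
  destruct (Gamma_spec a Ha) as [Ga _]. destruct (Gamma_spec b Hb) as [Gb _].
  destruct (Gamma_spec m Hm) as [Gm _].
  assert (H1 := is_RInt_gen_scal _ 2 _ Gm).
  assert (H2 := is_RInt_gen_plus _ _ _ _ (is_RInt_gen_scal _ lam _ Ga) (is_RInt_gen_scal _ (/ lam) _ Gb)).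
  assert (F1 : filter_prod (at_right 0) (Rbar_locally p_infty) (fun ab : R * R => fst ab <= snd ab)).
  { apply Filter_prod with (fun a => 0 < a < 1) (fun b => 1 < b).
    + exists (mkposreal 1 Rlt_0_1). intros y Hy Hy0. rewrite ballR in Hy. simpl in Hy.
      rewrite Rminus_0_r in Hy. apply Rabs_def2 in Hy. lra.
    + exists 1. auto.
    + intros; simpl; lra. }
  assert (F2 : filter_prod (at_right 0) (Rbar_locally p_infty)
    (fun ab : R * R => forall t, fst ab <= t <= snd ab ->
       Rabs (2 * gf m t) <= lam * gf a t + / lam * gf b t)).
  { apply Filter_prod with (fun a => 0 < a < 1) (fun b => 1 < b).
      + exists (mkposreal 1 Rlt_0_1). intros y Hy Hy0. rewrite ballR in Hy. simpl in Hy.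
        rewrite Rminus_0_r in Hy. apply Rabs_def2 in Hy. lra.
      + exists 1. auto.
      + intros a' b' Ha' Hb' t Ht. simpl in Ht.
        assert (Ht0 : 0 < t) by lra.
        assert (Hsq : gf m t * gf m t = gf a t * gf b t).
        { unfold gf, Rpower.
          replace (exp ((m - 1) * ln t) * exp (- t) * (exp ((m - 1) * ln t) * exp (- t)))
            with (exp ((m - 1) * ln t + (m - 1) * ln t) * (exp (- t) * exp (- t)))
            by (rewrite exp_plus; ring).
          replace (exp ((a - 1) * ln t) * exp (- t) * (exp ((b - 1) * ln t) * exp (- t)))
            with (exp ((a - 1) * ln t + (b - 1) * ln t) * (exp (- t) * exp (- t)))
            by (rewrite exp_plus; ring).
          f_equal. f_equal. unfold m. field. }
        assert (P1 := gf_pos m t). assert (P2 := gf_pos a t). assert (P3 := gf_pos b t).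
        set (u := lam * gf a t). set (v := / lam * gf b t).
        assert (Huv : u * v = gf m t * gf m t).
        { unfold u, v. rewrite Hsq. field. lra. }
        assert (0 < u) by (unfold u; apply Rmult_lt_0_compat; auto).
        assert (0 < v) by (unfold v; apply Rmult_lt_0_compat; auto; apply Rinv_0_lt_compat; auto).
        rewrite Rabs_pos_eq by lra.
        destruct (Rle_dec (2 * gf m t) (u + v)) as [h|h]; auto.
        assert (0 <= (u - v) ^ 2) by apply pow2_ge_0. nra. }
  assert (H := RInt_gen_norm (V:=R_CompleteNormedModule) _ _ _ _ F1 F2 H1 H2).
  unfold norm, plus, scal in H; simpl in H; unfold mult, abs in H; simpl in H.
  assert (Hk : 2 * Gamma m <= lam * Gamma a + / lam * Gamma b).
  { eapply Rle_trans; [apply Rle_abs| exact H]. }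
  unfold lam in Hk.
  assert (Hk2 : Gamma m <= Gamma b * Gamma a / Gamma m).
  { replace (Gamma m / Gamma a * Gamma a) with (Gamma m) in Hk by (field; lra).
    replace (/ (Gamma m / Gamma a) * Gamma b) with (Gamma b * Gamma a / Gamma m) in Hk by (field; lra).
    lra. }
  apply Rmult_le_compat_r with (r := Gamma m) in Hk2; [|lra].
  replace (Gamma b * Gamma a / Gamma m * Gamma m) with (Gamma a * Gamma b) in Hk2 by (field; lra).
  simpl. lra.
Qed.

Lemma frac_le a b c d : 0 < b -> 0 < d -> a * d <= c * b -> a / b <= c / d.
Proof.
  intros Hb Hd H.
  replace (a / b) with ((a * d) * / (b * d)) by (field; lra).
  replace (c / d) with ((c * b) * / (b * d)) by (field; lra).
  apply Rmult_le_compat_r. left; apply Rinv_0_lt_compat; nra. auto.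
Qed.

Definition Sf (t : R) := (t - 1/2) * ln t - t.

Lemma step_g t : 1 <= t -> 0 <= Sf (t + 1) - Sf t - ln t <= 1 / (12 * t^2).
Proof.
  intros Ht. set (w := / t).
  assert (Hw : 0 < w) by (apply Rinv_0_lt_compat; lra).
  assert (Htw : t * w = 1) by (unfold w; field; lra).
  assert (E : Sf (t + 1) - Sf t - ln t = ((1 + w/2) * ln (1 + w) - w) / w).
  { unfold Sf.
    assert (ln (t + 1) = ln t + ln (1 + w)).
    { rewrite <- ln_mult by lra. f_equal. unfold w. field. lra. }
    rewrite H. unfold w. field. lra. }
  rewrite E. destruct (T3 w) as [A B]; [lra|].
  split. apply Rdiv_le_0_compat; lra.
  apply Rle_div_l. lra.
  replace (1 / (12 * t ^ 2) * w) with (w ^ 3 / 12). lra.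
  replace (1 / (12 * t^2)) with (w ^ 2 / 12). field. unfold w; field; lra.
Qed.

Lemma lnG_shift y m : 2 <= y ->
  0 <= Sf (y + INR m) - Sf y - (ln (Gamma (y + INR m)) - ln (Gamma y))
    <= 1 / (y - 1) - 1 / (y + INR m - 1).
Proof.
  intros Hy. induction m as [|m IH].
  - simpl. rewrite Rplus_0_r. replace (1 / (y - 1) - 1 / (y - 1)) with 0 by ring. lra.
  - rewrite S_INR. set (t := y + INR m).
    assert (Hm := pos_INR m).
    assert (Ht : 2 <= t) by (unfold t; lra).
    replace (y + (INR m + 1)) with (t + 1) by (unfold t; ring).
    replace (y + INR m) with t in IH by auto.
    rewrite Gamma_succ by lra. rewrite ln_mult by (try apply Gamma_pos; lra).
    destruct (step_g t) as [A B]; [lra|].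
    assert (C : 1 / (12 * t ^ 2) <= 1 / (t - 1) - 1 / (t + 1 - 1)).
    { replace (1 / (t - 1) - 1 / (t + 1 - 1)) with (1 / (t * (t - 1))) by (field; lra).
      unfold Rdiv. rewrite !Rmult_1_l. apply Rinv_le_contravar. nra. nra. }
    replace (t + 1 - 1) with t in C by ring.
    replace (t + 1 - 1) with t by ring.
    split; lra.
Qed.

Lemma ln_sq x : 0 < x -> ln (x ^ 2) = 2 * ln x.
Proof. intros. simpl. rewrite Rmult_1_r, ln_mult by lra. ring. Qed.

Lemma lnG_half y : 2 <= y ->
  ln y - ln (y + 1/2) / 2 <= ln (Gamma (y + 1/2)) - ln (Gamma y) <= ln y / 2.
Proof.
  intros Hy.
  assert (P0 := Gamma_pos y ltac:(lra)). assert (P1 := Gamma_pos (y + 1/2) ltac:(lra)).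
  assert (P2 := Gamma_pos (y + 1) ltac:(lra)).
  assert (C1 := Gamma_cs y (y + 1) ltac:(lra) ltac:(lra)).
  replace ((y + (y + 1)) / 2) with (y + 1/2) in C1 by field.
  rewrite Gamma_succ in C1 by lra.
  assert (C2 := Gamma_cs (y + 1/2) (y + 1/2 + 1) ltac:(lra) ltac:(lra)).
  replace ((y + 1 / 2 + (y + 1 / 2 + 1)) / 2) with (y + 1) in C2 by field.
  rewrite Gamma_succ in C2 by lra. rewrite Gamma_succ in C2 by lra.
  apply ln_le in C1; [|apply pow_lt; auto].
  apply ln_le in C2; [|apply pow_lt; nra].
  rewrite ln_sq in C1, C2 by nra.
  rewrite ln_mult in C2 by nra. rewrite ln_mult in C2 by nra. rewrite ln_mult in C2 by nra.
  rewrite ln_mult in C1 by nra. rewrite ln_mult in C1 by nra.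
  split; lra.
Qed.

Lemma lnG_main y p : 2 <= y ->
  Rabs (ln (Gamma (y + INR p / 2)) - ln (Gamma y) - (Sf (y + INR p / 2) - Sf y)) <= 3 / y.
Proof.
  intros Hy.
  assert (Hy1 : 2 / y >= 1 / (y - 1)).
  { apply Rle_ge. apply frac_le; lra. }
  destruct (Nat.Even_or_Odd p) as [[m ->]|[m ->]].
  - replace (INR (2 * m) / 2) with (INR m) by (rewrite mult_INR; simpl; field).
    destruct (lnG_shift y m Hy) as [A B].
    assert (0 < 1 / (y + INR m - 1)). { assert (Hm := pos_INR m). apply Rdiv_lt_0_compat; lra. }
    rewrite Rabs_left1 by lra.
    assert (3 / y >= 2 / y). { unfold Rdiv. apply Rle_ge, Rmult_le_compat_r. left; apply Rinv_0_lt_compat; lra. lra. }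
    lra.
  - replace (INR (2 * m + 1) / 2) with (1/2 + INR m) by (rewrite plus_INR, mult_INR; simpl; field).
    replace (y + (1/2 + INR m)) with (y + 1/2 + INR m) by ring.
    destruct (lnG_shift (y + 1/2) m ltac:(lra)) as [A B].
    destruct (lnG_half y Hy) as [C D].
    assert (0 < 1 / (y + 1/2 + INR m - 1)). { assert (Hm := pos_INR m). apply Rdiv_lt_0_compat; lra. }
    assert (E1 : 1 / (y + 1/2 - 1) <= 2 / y).
    { apply Rle_trans with (1 / (y - 1)); [|lra]. apply Rmult_le_compat_l; [lra|]. apply Rinv_le_contravar; lra. }
    set (w := / (2 * y)).
    assert (Hw : 0 < w) by (apply Rinv_0_lt_compat; lra).
    assert (Lw : ln (y + 1/2) = ln y + ln (1 + w)).
    { rewrite <- ln_mult by lra. f_equal. unfold w. field. lra. }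
    destruct (T4 w) as [T4a T4b]; [lra|].
    assert (ES : Sf (y + 1/2) - Sf y = ln y / 2 + (ln (1 + w) - w) / (2 * w)).
    { unfold Sf. rewrite Lw. unfold w. field. lra. }
    assert (Ew : w = 1 / (2 * y)) by (unfold w; field; lra).
    assert (ES2 : - (1 / (8 * y)) <= (ln (1 + w) - w) / (2 * w) <= 0).
    { split.
      - apply Rle_trans with ((- (w^2/2)) / (2 * w)).
        + right. rewrite Ew. field. lra.
        + unfold Rdiv. apply Rmult_le_compat_r. left; apply Rinv_0_lt_compat; lra. lra.
      - replace ((ln (1 + w) - w) / (2 * w)) with (- ((w - ln (1 + w)) / (2 * w))) by (field; lra).
        assert (0 <= (w - ln (1 + w)) / (2 * w)) by (apply Rdiv_le_0_compat; lra). lra. }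
    assert (LB : ln (1 + w) <= w) by lra.
    assert (0 <= ln (1 + w)). { rewrite <- ln_1. apply ln_le; lra. }
    rewrite Lw in C.
    set (iy := 1 / y).
    assert (e1 : 2 / y = 2 * iy) by (unfold iy; field; lra).
    assert (e2 : 3 / y = 3 * iy) by (unfold iy; field; lra).
    assert (e3 : 1 / (8 * y) = iy / 8) by (unfold iy; field; lra).
    assert (e4 : w = iy / 2) by (unfold iy, w; field; lra).
    rewrite e1 in E1. rewrite e2. rewrite e3 in ES2. rewrite e4 in LB.
    apply Rabs_le. split; lra.
Qed.

Lemma div_lt1 a b : 0 < b -> a < b -> a / b < 1.
Proof.
  intros Hb H. unfold Rdiv. apply Rmult_lt_reg_r with b; auto.
  rewrite Rmult_assoc, Rinv_l by lra. lra.
Qed.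

Fixpoint sumR (f : nat -> R) (m : nat) : R :=
  match m with O => 0 | S m' => sumR f m' + f m' end.

Lemma sumR_ext f g m : (forall j, (j < m)%nat -> f j = g j) -> sumR f m = sumR g m.
Proof.
  induction m; intros H; simpl; auto. rewrite IHm by (intros; apply H; lia). rewrite H by lia. auto.
Qed.

Lemma sumR_lin f g h m : sumR (fun j => f j + g j - h j) m = sumR f m + sumR g m - sumR h m.
Proof. induction m; simpl; [ring|]. rewrite IHm. ring. Qed.

Lemma sumR_const c m : sumR (fun _ => c) m = INR m * c.
Proof. induction m; simpl sumR; [simpl; ring|]. rewrite IHm, S_INR. ring. Qed.

Lemma sumR_tele (F : R -> R) m : sumR (fun j => F (INR j + 1) - F (INR j)) m = F (INR m) - F 0.
Proof. induction m; simpl sumR; [simpl; ring|]. rewrite IHm, S_INR. ring. Qed.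

Lemma sumR_bound f m B : (forall j, (j < m)%nat -> Rabs (f j) <= B) -> Rabs (sumR f m) <= INR m * B.
Proof.
  induction m; intros H; simpl sumR.
  - simpl. rewrite Rabs_R0. lra.
  - rewrite S_INR. eapply Rle_trans; [apply Rabs_triang|].
    assert (Rabs (sumR f m) <= INR m * B) by (apply IHm; intros; apply H; lia).
    assert (Rabs (f m) <= B) by (apply H; lia). lra.
Qed.

Lemma prodR_pos f m : (forall j, (j < m)%nat -> 0 < f j) -> 0 < prodR f m.
Proof.
  induction m; intros H; simpl; [lra|]. apply Rmult_lt_0_compat.
  apply IHm; intros; apply H; lia. apply H; lia.
Qed.

Lemma ln_prodR f m : (forall j, (j < m)%nat -> 0 < f j) -> ln (prodR f m) = sumR (fun j => ln (f j)) m.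
Proof.
  induction m; intros H; simpl; [apply ln_1|].
  rewrite ln_mult. rewrite IHm. auto. intros; apply H; lia.
  apply prodR_pos; intros; apply H; lia. apply H; lia.
Qed.

Definition poly (M j : R) := - j + j^2 / (2 * M) + j^3 / (6 * M^2) + j / M.
Definition psi (M j : R) := (M - j - 1) * ln (1 - j / M).

Lemma psi_exp M j : 0 < M -> 0 <= j <= M / 2 ->
  Rabs (psi M j - poly M j) <= j^4 / (6 * M^3) + j^2 / M^2.
Proof.
  intros HM Hj. set (u := j / M).
  assert (Hu : 0 <= u <= 1/2).
  { unfold u. split. apply Rdiv_le_0_compat; lra. apply Rle_div_l; lra. }
  set (L := ln (1 - u)).
  assert (E : psi M j - poly M j = M * ((1 - u) * L + u - u^2/2 - u^3/6) + (- L - u)).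
  { unfold psi, poly, L, u. field. lra. }
  rewrite E. destruct (T1 u Hu) as [A1 A2]. destruct (T2 u Hu) as [B1 B2].
  fold L in A1, A2, B1, B2.
  assert (e1 : M * (u^4/6) = j^4 / (6 * M^3)) by (unfold u; field; lra).
  assert (e2 : u^2 = j^2 / M^2) by (unfold u; field; lra).
  assert (0 <= M * ((1 - u) * L + u - u ^ 2 / 2 - u ^ 3 / 6)) by (apply Rmult_le_pos; lra).
  assert (M * ((1 - u) * L + u - u ^ 2 / 2 - u ^ 3 / 6) <= M * (u^4/6)) by (apply Rmult_le_compat_l; lra).
  rewrite Rabs_pos_eq by lra. lra.
Qed.

Definition KAr (N P Q : R) : R :=
  - (P * Q) / 2 + Q * (Q + 1) / 4 * ln (1 + P / (N - P))
  - P * Q ^ 3 / (12 * N ^ 2) - (N - P - Q - 1) / 2 * Q * ln (1 - P / N).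

Lemma K_approx_KAr n p q : K_approx n p q = KAr (INR n) (INR p) (INR q).
Proof. reflexivity. Qed.

Lemma W_id N P j : 0 < N -> 0 <= P -> 0 < N - P -> 0 <= j < N - P ->
  P / 2 * ln (2 / N) + (Sf ((N - j) / 2) - Sf ((N - P - j) / 2)) - (KAr N P (j + 1) - KAr N P j)
  = psi N j / 2 - psi (N - P) j / 2 + P * (3 * j^2 + 3 * j + 1) / (12 * N^2).
Proof.
  intros HN HP HD Hj.
  assert (l1 : ln ((N - j) / 2) = ln (N / 2) + ln (1 - j / N)).
  { assert (j / N < 1) by (apply div_lt1; lra).
    rewrite <- ln_mult by lra. f_equal. field. lra. }
  assert (HPN : 0 < 1 - P / N). { replace (1 - P / N) with ((N - P) / N) by (field; lra). apply Rdiv_lt_0_compat; lra. }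
  assert (HjD : 0 < 1 - j / (N - P)). { assert (j / (N - P) < 1) by (apply div_lt1; lra). lra. }
  assert (l2 : ln ((N - P - j) / 2) = ln (N / 2) + ln (1 - P / N) + ln (1 - j / (N - P))).
  { assert (0 < N / 2 * (1 - P / N)) by (apply Rmult_lt_0_compat; lra).
    rewrite <- ln_mult by lra. rewrite <- ln_mult by lra. f_equal. field. lra. }
  assert (l3 : ln (2 / N) = - ln (N / 2)).
  { rewrite <- ln_Rinv by lra. f_equal. field. lra. }
  assert (l4 : ln (1 + P / (N - P)) = - ln (1 - P / N)).
  { rewrite <- ln_Rinv by lra. f_equal. field. lra. }
  unfold Sf, KAr, psi. rewrite l1, l2, l3, l4.
  field. lra.
Qed.

Lemma le_div_d (d N D : R) : 0 < d -> d * N <= D -> N <= D / d.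
Proof.
  intros Hd H. replace N with ((d * N) / d) by (field; lra).
  unfold Rdiv. apply Rmult_le_compat_r. left; apply Rinv_0_lt_compat; auto. auto.
Qed.

Ltac pos := repeat (apply Rmult_lt_0_compat || apply pow_lt || apply Rinv_0_lt_compat); try lra.

Section B.
Variables (N D j Q C d : R).
Hypotheses (Hd : 0 < d) (HC : 1 <= C) (HN : 0 < N) (HD1 : d * N <= D) (HD2 : D <= N)
  (Hj : 0 <= j <= Q) (HPQ : (N - D) * Q <= C * N) (HQQ : Q * Q <= C * N).

Lemma Dpos : 0 < D.
Proof. nra. Qed.

Lemma NDd : N <= D / d.
Proof. apply le_div_d; auto. Qed.

Lemma jP : 0 <= j * (N - D) <= C * N.
Proof. split. apply Rmult_le_pos; lra. apply Rle_trans with ((N - D) * Q); [|auto]. nra. Qed.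

Lemma jj : 0 <= j * j <= C * N.
Proof. split. nra. apply Rle_trans with (Q * Q); [|auto]. nra. Qed.

Lemma B1 : j^2 * (N - D)^2 / (4 * N^2 * D) <= C^2 / (4 * d) / N.
Proof.
  assert (HDp := Dpos). assert (H1 := NDd). destruct jP as [A B].
  apply frac_le. pos. auto.
  replace (j ^ 2 * (N - D) ^ 2 * N) with ((j * (N - D))^2 * N) by ring.
  replace (C ^ 2 / (4 * d) * (4 * N ^ 2 * D)) with ((C * N)^2 * (D / d)) by (field; lra).
  apply Rmult_le_compat. apply pow2_ge_0. lra. apply pow_incr; lra. auto.
Qed.

Lemma B2 : j^3 * (N - D) * (N + D) / (12 * N^2 * D^2) <= C^2 / (6 * d^2) / N.
Proof.
  assert (HDp := Dpos). assert (H1 := NDd). destruct jP as [A B]. destruct jj as [A' B'].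
  apply frac_le. pos. auto.
  replace (j ^ 3 * (N - D) * (N + D) * N) with ((j * j) * (j * (N - D)) * ((N + D) * N)) by ring.
  replace (C ^ 2 / (6 * d ^ 2) * (12 * N ^ 2 * D ^ 2)) with ((C * N) * (C * N) * (2 * (D / d)^2)) by (field; lra).
  apply Rmult_le_compat. nra. nra. apply Rmult_le_compat; lra.
  apply Rle_trans with (2 * N * N). nra.
  assert (N * N <= (D / d) ^ 2). { simpl. rewrite Rmult_1_r. apply Rmult_le_compat; lra. } lra.
Qed.

Lemma B3 : j * (N - D) / (2 * N * D) <= C / (2 * d) / N.
Proof.
  assert (HDp := Dpos). assert (H1 := NDd). destruct jP as [A B].
  apply frac_le. pos. auto.
  replace (C / (2 * d) * (2 * N * D)) with ((C * N) * (D / d)) by (field; lra).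
  apply Rmult_le_compat; lra.
Qed.

Lemma B4 : (N - D) * (3 * j + 1) / (12 * N^2) <= (3 * C + 1) / 12 / N.
Proof.
  assert (HDp := Dpos). destruct jP as [A B].
  apply frac_le. pos. auto.
  replace ((3 * C + 1) / 12 * (12 * N ^ 2)) with (((3 * C + 1) * N) * N) by (field; lra).
  apply Rmult_le_compat_r. lra. nra.
Qed.

Lemma Pi_bound : Rabs ((poly N j - poly D j) / 2 + (N - D) * (3 * j^2 + 3 * j + 1) / (12 * N^2))
  <= (C^2 / (4 * d) + C^2 / (6 * d^2) + C / (2 * d) + (3 * C + 1) / 12) / N.
Proof.
  assert (HDp := Dpos).
  replace ((poly N j - poly D j) / 2 + (N - D) * (3 * j^2 + 3 * j + 1) / (12 * N^2)) with
    (- (j^2 * (N - D)^2 / (4 * N^2 * D)) - j^3 * (N - D) * (N + D) / (12 * N^2 * D^2)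
     - j * (N - D) / (2 * N * D) + (N - D) * (3 * j + 1) / (12 * N^2))
    by (unfold poly; field; lra).
  assert (0 <= j^2 * (N - D)^2 / (4 * N^2 * D)).
  { apply Rdiv_le_0_compat. apply Rmult_le_pos; apply pow2_ge_0. pos. }
  assert (0 <= j^3 * (N - D) * (N + D) / (12 * N^2 * D^2)).
  { apply Rdiv_le_0_compat. apply Rmult_le_pos. apply Rmult_le_pos. apply pow_le; lra. lra. lra. pos. }
  assert (0 <= j * (N - D) / (2 * N * D)). { apply Rdiv_le_0_compat. apply Rmult_le_pos; lra. pos. }
  assert (0 <= (N - D) * (3 * j + 1) / (12 * N^2)). { apply Rdiv_le_0_compat. apply Rmult_le_pos; lra. pos. }
  assert (K1 := B1). assert (K2 := B2). assert (K3 := B3). assert (K4 := B4).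
  replace ((C^2 / (4 * d) + C^2 / (6 * d^2) + C / (2 * d) + (3 * C + 1) / 12) / N) with
    (C^2 / (4 * d) / N + C^2 / (6 * d^2) / N + C / (2 * d) / N + (3 * C + 1) / 12 / N) by (field; lra).
  apply Rabs_le. split; lra.
Qed.
End B.

Lemma E_bound N M j Q C d : 0 < d -> 1 <= C -> 0 < N -> d * N <= M -> 0 <= j <= Q -> Q * Q <= C * N ->
  j^4 / (6 * M^3) + j^2 / M^2 <= (C^2 / (6 * d^3) + C / d^2) / N.
Proof.
  intros Hd HC HN HM Hj HQ.
  assert (HMp : 0 < M) by nra.
  assert (H1 : N <= M / d) by (apply le_div_d; auto).
  assert (jj : j * j <= C * N) by nra.
  assert (A : j^4 / (6 * M^3) <= C^2 / (6 * d^3) / N).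
  { apply frac_le. pos. auto.
    replace (j ^ 4 * N) with ((j * j)^2 * N) by ring.
    replace (C ^ 2 / (6 * d ^ 3) * (6 * M ^ 3)) with ((C * N)^2 * ((M / d)^3 / N^2)) by (field; lra).
    apply Rmult_le_compat. apply pow2_ge_0. lra. apply pow_incr; nra.
    apply Rle_trans with (N^3 / N^2). right; field; lra.
    unfold Rdiv; apply Rmult_le_compat_r. left; pos. apply pow_incr; lra. }
  assert (B : j^2 / M^2 <= C / d^2 / N).
  { apply frac_le. pos. auto.
    replace (C / d ^ 2 * M ^ 2) with (C * (M / d)^2) by (field; lra).
    replace (j^2 * N) with ((j * j) * N) by ring.
    apply Rle_trans with (C * N * N). apply Rmult_le_compat_r; lra.
    rewrite Rmult_assoc. apply Rmult_le_compat_l. lra.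
    replace (N * N) with (N ^ 2) by ring. apply pow_incr; lra. }
  replace ((C^2 / (6 * d^3) + C / d^2) / N) with (C^2 / (6 * d^3) / N + C / d^2 / N) by (field; lra).
  lra.
Qed.

Definition kappa (d C : R) := 8 / d + (C^2 / (4 * d) + C^2 / (6 * d^2) + C / (2 * d) + (3 * C + 1) / 12)
  + (C^2 / (6 * d^3) + C / d^2).

Lemma rj_bound (N : R) (p : nat) (Q C d j : R) :
  0 < d <= 1 -> 1 <= C -> 0 < N -> d * N <= N - INR p -> INR p * Q <= C * N -> Q * Q <= C * N ->
  Q <= d * N / 4 -> 6 <= d * N -> 0 <= j <= Q ->
  Rabs (INR p / 2 * ln (2 / N) + (ln (Gamma ((N - j) / 2)) - ln (Gamma ((N - INR p - j) / 2)))
        - (KAr N (INR p) (j + 1) - KAr N (INR p) j)) <= kappa d C / N.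
Proof.
  intros Hd HC HN HD HPQ HQQ HQ Hd6 Hj.
  set (P := INR p) in *. assert (HP : 0 <= P) by apply pos_INR.
  set (y := (N - P - j) / 2).
  assert (Hy : 3 * d * N / 8 <= y) by (unfold y; lra).
  assert (Hy2 : 2 <= y) by lra.
  assert (Ex : (N - j) / 2 = y + P / 2) by (unfold y; field).
  assert (G := lnG_main y p Hy2). fold P in G.
  assert (G2 : 3 / y <= 8 / d / N).
  { apply frac_le. lra. auto. replace (8 / d * y) with (8 * y / d) by (field; lra).
    apply le_div_d. lra. lra. }
  assert (W := W_id N P j HN HP ltac:(lra) ltac:(lra)).
  assert (Pi := Pi_bound N (N - P) j Q C d ltac:(lra) HN HD ltac:(lra) Hj
                 ltac:(replace (N - (N - P)) with P by ring; auto) HQQ).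
  replace (N - (N - P)) with P in Pi by ring.
  assert (e1 := psi_exp N j HN ltac:(lra)).
  assert (e2 := psi_exp (N - P) j ltac:(lra) ltac:(lra)).
  assert (b1 := E_bound N N j Q C d ltac:(lra) HC HN ltac:(lra) Hj HQQ).
  assert (b2 := E_bound N (N - P) j Q C d ltac:(lra) HC HN HD Hj HQQ).
  rewrite Ex.
  set (A := ln (Gamma (y + P / 2)) - ln (Gamma y) - (Sf (y + P / 2) - Sf y)) in *.
  set (B := (poly N j - poly (N - P) j) / 2 + P * (3 * j ^ 2 + 3 * j + 1) / (12 * N ^ 2)) in *.
  set (e := psi N j - poly N j) in *. set (e' := psi (N - P) j - poly (N - P) j) in *.
  rewrite Ex in W. fold y in W.
  replace (P / 2 * ln (2 / N) + (ln (Gamma (y + P / 2)) - ln (Gamma y)) -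
           (KAr N P (j + 1) - KAr N P j)) with (A + B + e / 2 - e' / 2).
  2:{ unfold A, B, e, e'. lra. }
  unfold kappa.
  replace ((8 / d + (C ^ 2 / (4 * d) + C ^ 2 / (6 * d ^ 2) + C / (2 * d) + (3 * C + 1) / 12) +
            (C ^ 2 / (6 * d ^ 3) + C / d ^ 2)) / N) with
    (8 / d / N + (C ^ 2 / (4 * d) + C ^ 2 / (6 * d ^ 2) + C / (2 * d) + (3 * C + 1) / 12) / N
     + (C ^ 2 / (6 * d ^ 3) + C / d ^ 2) / N) by (field; lra).
  assert (Rabs (A + B + e / 2 - e' / 2) <= Rabs A + Rabs B + Rabs e / 2 + Rabs e' / 2).
  { unfold Rminus. eapply Rle_trans. apply Rabs_triang. rewrite Rabs_Ropp.
    eapply Rle_trans. apply Rplus_le_compat_r. eapply Rle_trans. apply Rabs_triang.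
    apply Rplus_le_compat_r. apply Rabs_triang.
    unfold Rdiv. rewrite !Rabs_mult. rewrite (Rabs_pos_eq (/ 2)) by lra. lra. }
  lra.
Qed.

Lemma kappa_pos d C : 0 < d -> 1 <= C -> 0 < kappa d C.
Proof.
  intros Hd HC. unfold kappa.
  assert (0 < 8 / d) by (apply Rdiv_lt_0_compat; lra).
  assert (0 <= C^2 / (4 * d)) by (apply Rdiv_le_0_compat; [apply pow2_ge_0|lra]).
  assert (0 <= C^2 / (6 * d^2)) by (apply Rdiv_le_0_compat; [apply pow2_ge_0| pos]).
  assert (0 <= C / (2 * d)) by (apply Rdiv_le_0_compat; lra).
  assert (0 <= C^2 / (6 * d^3)) by (apply Rdiv_le_0_compat; [apply pow2_ge_0| pos]).
  assert (0 <= C / d^2) by (apply Rdiv_le_0_compat; [lra| pos]).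
  lra.
Qed.

Lemma main_bound (n p q : nat) (c C0 : R) :
  (1 <= q)%nat -> (q <= p)%nat -> (p < n)%nat -> c < 1 ->
  INR p / INR n <= c -> INR p * INR q <= C0 * INR n ->
  let d := Rmin (1 - c) 1 in let C := Rmax C0 1 in
  16 * C / d^2 <= INR n -> 6 / d <= INR n ->
  Rabs (ln (K n p q) - K_approx n p q) <= INR q * (kappa d C / INR n).
Proof.
  intros H1 H2 H3 Hc Hpn HPQ d C HN1 HN2.
  set (N := INR n) in *. set (P := INR p) in *. set (Q := INR q) in *.
  assert (Hd : 0 < d <= 1). { unfold d. split. apply Rmin_pos; lra. apply Rmin_r. }
  assert (Hdc : d <= 1 - c) by (unfold d; apply Rmin_l).
  assert (HC : 1 <= C) by (unfold C; apply Rmax_r).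
  assert (HC0 : C0 <= C) by (unfold C; apply Rmax_l).
  assert (HQ1 : 1 <= Q) by (unfold Q; change 1 with (INR 1); apply le_INR; auto).
  assert (HQP : Q <= P) by (unfold Q, P; apply le_INR; auto).
  assert (HPN : P < N) by (unfold P, N; apply lt_INR; auto).
  assert (HN : 0 < N) by lra.
  assert (HD : d * N <= N - P).
  { assert (P <= c * N). { replace P with (P / N * N) by (field; lra). apply Rmult_le_compat_r; lra. } nra. }
  assert (HPQ' : P * Q <= C * N) by nra.
  assert (HQQ : Q * Q <= C * N) by nra.
  assert (Hd6 : 6 <= d * N).
  { apply Rmult_le_reg_r with (/ d). apply Rinv_0_lt_compat; lra.
    replace (d * N * / d) with N by (field; lra). auto. }
  assert (HQd : Q <= d * N / 4).
  { assert (C * N <= (d * N / 4)^2).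
    { replace ((d * N / 4)^2) with (d^2 / 16 * N * N) by field.
      apply Rmult_le_compat_r. lra.
      apply Rmult_le_reg_r with (16 / d^2). pos.
      replace (d ^ 2 / 16 * N * (16 / d ^ 2)) with N by (field; lra).
      replace (C * (16 / d ^ 2)) with (16 * C / d^2) by (field; lra). lra. }
    assert (0 <= d * N / 4) by nra.
    destruct (Rle_dec Q (d * N / 4)) as [h|h]; auto. nra. }
  assert (Hpos : forall j, (j < q)%nat ->
            2 <= (N - INR j) / 2 /\ 2 <= (N - P - INR j) / 2).
  { intros j Hj. assert (INR j <= Q) by (unfold Q; apply le_INR; lia).
    assert (0 <= INR j) by apply pos_INR. split; lra. }
  assert (EK : ln (K n p q) = sumR (fun _ => P / 2 * ln (2 / N)) q +
      sumR (fun j => ln (Gamma ((N - INR j) / 2)) - ln (Gamma ((N - P - INR j) / 2))) q).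
  { unfold K. fold N P Q.
    assert (Hpr : forall j, (j < q)%nat -> 0 < Gamma ((N - INR j) / 2) / Gamma ((N - P - INR j) / 2)).
    { intros j Hj. destruct (Hpos j Hj). apply Rdiv_lt_0_compat; apply Gamma_pos; lra. }
    rewrite ln_mult. 2:{ unfold Rpower; apply exp_pos. } 2:{ apply prodR_pos; auto. }
    rewrite ln_prodR by auto. unfold Rpower. rewrite ln_exp. rewrite sumR_const. fold Q.
    f_equal. field. apply sumR_ext. intros j Hj. destruct (Hpos j Hj).
    apply ln_div; apply Gamma_pos; lra. }
  assert (EA : K_approx n p q = sumR (fun j => KAr N P (INR j + 1) - KAr N P (INR j)) q).
  { rewrite K_approx_KAr. fold N P Q. rewrite (sumR_tele (KAr N P)). fold Q.
    replace (KAr N P 0) with 0 by (unfold KAr; field; lra). ring. }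
  rewrite EK, EA. rewrite <- sumR_lin.
  apply sumR_bound. intros j Hj.
  assert (INR j <= Q) by (unfold Q; apply le_INR; lia).
  assert (0 <= INR j) by apply pos_INR.
  apply (rj_bound N p Q C d (INR j)); auto; lra.
Qed.

Theorem lemma2p7 (p q : nat -> nat)
  (Hrange : exists N : nat, forall n : nat, (N <= n)%nat ->
              (1 <= q n)%nat /\ (q n <= p n)%nat /\ (p n < n)%nat)
  (Hpinf : forall M : nat, exists N : nat, forall n : nat, (N <= n)%nat -> (M <= p n)%nat)
  (Hlimsup : exists c : R, c < 1 /\ exists N : nat, forall n : nat, (N <= n)%nat ->
              INR (p n) / INR n <= c)
  (HO : exists C : R, exists N : nat, forall n : nat, (N <= n)%nat ->
              INR (p n) * INR (q n) <= C * INR n) :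
  is_lim_seq (fun n => ln (K n (p n) (q n)) - K_approx n (p n) (q n)) 0.
Proof.
  destruct Hrange as [N1 Hr]. destruct Hlimsup as [c [Hc1 [N2 Hc]]]. destruct HO as [C0 [N3 HC]].
  set (d := Rmin (1 - c) 1). set (C := Rmax C0 1). set (k := kappa d C).
  assert (Hd : 0 < d) by (unfold d; apply Rmin_pos; lra).
  assert (HC1 : 1 <= C) by (unfold C; apply Rmax_r).
  assert (HC0 : C0 <= C) by (unfold C; apply Rmax_l).
  assert (Hk : 0 < k) by (apply kappa_pos; auto).
  apply is_lim_seq_spec. intros eps. assert (He := cond_pos eps).
  destruct (INR_unbounded (Rmax (16 * C / d^2) (Rmax (6 / d) (k^2 * C / eps^2)))) as [N4 H4].
  exists (max N1 (max N2 (max N3 N4))). intros n Hn.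
  destruct (Hr n ltac:(lia)) as [h1 [h2 h3]].
  assert (hc := Hc n ltac:(lia)). assert (hC := HC n ltac:(lia)).
  assert (HN4 : INR N4 <= INR n) by (apply le_INR; lia).
  assert (M1 := Rmax_l (16 * C / d^2) (Rmax (6 / d) (k^2 * C / eps^2))).
  assert (M2 := Rmax_r (16 * C / d^2) (Rmax (6 / d) (k^2 * C / eps^2))).
  assert (M3 := Rmax_l (6 / d) (k^2 * C / eps^2)).
  assert (M4 := Rmax_r (6 / d) (k^2 * C / eps^2)).
  assert (A1 : 16 * C / d^2 <= INR n) by lra.
  assert (A2 : 6 / d <= INR n) by lra.
  assert (B := main_bound n (p n) (q n) c C0 h1 h2 h3 Hc1 hc hC A1 A2).
  fold d C k in B. simpl in B.
  rewrite Rminus_0_r.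
  set (N := INR n) in *. set (P := INR (p n)) in *. set (Q := INR (q n)) in *.
  assert (HQ0 : 0 <= Q) by apply pos_INR.
  assert (HQP : Q <= P) by (unfold Q, P; apply le_INR; auto).
  assert (HNpos : 0 < N).
  { assert (0 < k ^ 2 * C / eps ^ 2). { apply Rdiv_lt_0_compat. apply Rmult_lt_0_compat. pos. lra. pos. } lra. }
  assert (HQQ : Q * Q <= C * N) by nra.
  assert (HX : 0 <= Q * (k / N)) by (apply Rmult_le_pos; [lra| apply Rdiv_le_0_compat; lra]).
  assert (HXX : (Q * (k / N)) * (Q * (k / N)) < eps * eps).
  { replace ((Q * (k / N)) * (Q * (k / N))) with (k^2 * (Q * Q) / N^2) by (field; lra).
    apply Rle_lt_trans with (k^2 * (C * N) / N^2).
    { unfold Rdiv. apply Rmult_le_compat_r. left; pos. apply Rmult_le_compat_l. apply pow2_ge_0. auto. }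
    replace (k ^ 2 * (C * N) / N ^ 2) with (k^2 * C / N) by (field; lra).
    apply Rmult_lt_reg_r with (N / (eps * eps)). apply Rdiv_lt_0_compat; pos.
    replace (k ^ 2 * C / N * (N / (eps * eps))) with (k^2 * C / eps^2) by (field; lra).
    replace (eps * eps * (N / (eps * eps))) with N by (field; lra). lra. }
  eapply Rle_lt_trans; [exact B|].
  destruct (Rlt_dec (Q * (k / N)) eps) as [h|h]; auto. nra.
Qed.
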